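(* For every integer $n\ge0$, every $k\in\mathcal K$ and every pair $s<s'$ in $S$: (1) if $n$ is odd, then $m_{n+1}^{(s'),\dagger}(k)-m_n^{(s'),\dagger}(k)\ge m_{n+1}^{(s),\dagger}(k)-m_n^{(s),\dagger}(k)$; (2) if $n$ is even, then $m_{n+1}^{(s'),\dagger}(k)-m_n^{(s'),\dagger}(k)\le m_{n+1}^{(s),\dagger}(k)-m_n^{(s),\dagger}(k)$.
   Context: Fix a prime $p\ge7$ and $k_0\in\{2,\dots,p\}$. $\{n\}$ is the residue of $n$ mod $p-1$ in $\{0,\dots,p-2\}$. $\mathcal K=\{k\ge2:k\equiv k_0\pmod{p-1}\}$, $k_\bullet=(k-k_0)/(p-1)$. For $s\in\{0,\dots,p-2\}$: $a_s=\{k_0-2-2s\}$, $\delta_s=\lfloor\frac{s+\{a_s+s\}}{p-1}\rfloor$; if $a_s+s<p-1$, $t_1^{(s)}=s+\delta_s$, $t_2^{(s)}=a_s+s+\delta_s+2$; otherwise $t_1^{(s)}=\{a_s+s\}+\delta_s+1$, $t_2^{(s)}=s+\delta_s+1$. For $k\in\mathcal K$: $d_k^{ur,\dagger}(s)=\lfloor\frac{k_\bullet-t_1^{(s)}}{p+1}\rfloor+\lfloor\frac{k_\bullet-t_2^{(s)}}{p+1}\rfloor+2+\delta_s$, $d_k^{Iw,\dagger}=2k_\bullet+2$, and $m_n^{(s),\dagger}(k)=\min\{n-d_k^{ur,\dagger}(s),d_k^{Iw,\dagger}-d_k^{ur,\dagger}(s)-n\}$ if $d_k^{ur,\dagger}(s)<n<d_k^{Iw,\dagger}-d_k^{ur,\dagger}(s)$,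 else $0$. $S=\{\lceil\frac{k_0+1}{2}\rceil,\dots,\lfloor\frac{k_0+p-4}{2}\rfloor\}$. *)

(* Defs.v *)
From Stdlib Require Import Bool ZArith Znumtheory.
Open Scope Z_scope.

Definition resid (p n : Z) : Z := n mod (p - 1).

Definition ceil_div (a b : Z) : Z := - ((- a) / b).

Definition a_s (p k0 s : Z) : Z := resid p (k0 - 2 - 2 * s).

Definition delta_s (p k0 s : Z) : Z :=
  (s + resid p (a_s p k0 s + s)) / (p - 1).

Definition t1 (p k0 s : Z) : Z :=
  if a_s p k0 s + s <? p - 1 then s + delta_s p k0 s
  else resid p (a_s p k0 s + s) + delta_s p k0 s + 1.

Definition t2 (p k0 s : Z) : Z :=
  if a_s p k0 s + s <? p - 1 then a_s p k0 s + s + delta_s p k0 s + 2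
  else s + delta_s p k0 s + 1.

Definition inK (p k0 k : Z) : Prop := 2 <= k /\ k mod (p - 1) = k0 mod (p - 1).

Definition kbullet (p k0 k : Z) : Z := (k - k0) / (p - 1).

Definition d_ur (p k0 s k : Z) : Z :=
  (kbullet p k0 k - t1 p k0 s) / (p + 1) + (kbullet p k0 k - t2 p k0 s) / (p + 1)
  + 2 + delta_s p k0 s.

Definition d_Iw (p k0 k : Z) : Z := 2 * kbullet p k0 k + 2.

Definition m_dag (p k0 s n k : Z) : Z :=
  if andb (d_ur p k0 s k <? n) (n <? d_Iw p k0 k - d_ur p k0 s k) then
    Z.min (n - d_ur p k0 s k) (d_Iw p k0 k - d_ur p k0 s k - n)
  else 0.

Definition inS (p k0 s : Z) : Prop :=
  ceil_div (k0 + 1) 2 <= s <= (k0 + p - 4) / 2.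

(* Main.v *)
Require Import Defs.
From Stdlib Require Import ZArith Znumtheory Lia.
Open Scope Z_scope.

Lemma inS_bounds p k0 s : 7 <= p -> inS p k0 s -> k0 + 1 <= 2 * s /\ 2 * s <= k0 + p - 4.
Proof.
  intros Hp [H1 H2]. unfold ceil_div in H1.
  pose proof (Z.div_mod (-(k0+1)) 2 ltac:(lia)).
  pose proof (Z.mod_pos_bound (-(k0+1)) 2 ltac:(lia)).
  pose proof (Z.div_mod (k0+p-4) 2 ltac:(lia)).
  pose proof (Z.mod_pos_bound (k0+p-4) 2 ltac:(lia)).
  lia.
Qed.

Lemma d_ur_eq p k0 s k : 7 <= p -> 2 <= k0 <= p -> inS p k0 s ->
  d_ur p k0 s k = (kbullet p k0 k - 1 - s) / (p + 1)
                  + (kbullet p k0 k + 1 - k0 + s) / (p + 1) + 2.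
Proof.
  intros Hp Hk HS. destruct (inS_bounds p k0 s Hp HS) as [B1 B2].
  assert (Ha : a_s p k0 s = k0 + p - 3 - 2 * s).
  { unfold a_s, resid. symmetry. apply (Z.mod_unique _ _ (-1)); lia. }
  set (kb := kbullet p k0 k).
  unfold d_ur, t1, t2, delta_s. fold kb. rewrite Ha.
  destruct (Z.le_gt_cases s (k0 - 2)) as [C|C].
  - assert (Hr : resid p (k0 + p - 3 - 2 * s + s) = k0 - 2 - s).
    { unfold resid. symmetry. apply (Z.mod_unique _ _ 1); lia. }
    rewrite Hr.
    assert (Hd : (s + (k0 - 2 - s)) / (p - 1) = 0).
    { symmetry. apply (Z.div_unique _ _ _ (k0-2)); lia. }
    rewrite Hd.
    replace (k0 + p - 3 - 2 * s + s <? p - 1) with false by (symmetry; apply Z.ltb_ge; lia).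
    replace (kb - (k0 - 2 - s + 0 + 1)) with (kb + 1 - k0 + s) by lia.
    replace (kb - (s + 0 + 1)) with (kb - 1 - s) by lia. lia.
  - assert (Hr : resid p (k0 + p - 3 - 2 * s + s) = k0 + p - 3 - s).
    { unfold resid. symmetry. apply (Z.mod_unique _ _ 0); lia. }
    rewrite Hr.
    assert (Hd : (s + (k0 + p - 3 - s)) / (p - 1) = 1).
    { symmetry. apply (Z.div_unique _ _ _ (k0-2)); lia. }
    rewrite Hd.
    replace (k0 + p - 3 - 2 * s + s <? p - 1) with true by (symmetry; apply Z.ltb_lt; lia).
    replace (kb - (s + 1)) with (kb - 1 - s) by lia.
    replace (kb - (k0 + p - 3 - 2 * s + s + 1 + 2)) with ((kb + 1 - k0 + s) + (-1) * (p+1)) by lia.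
    rewrite Z.div_add by lia. lia.
Qed.

Lemma floor_step P X Y X' Y' : 0 < P -> X' <= X -> Y <= Y' -> X <= Y <= X + P -> X' <= Y' <= X' + P ->
  let F := X / P + Y / P in let F' := X' / P + Y' / P in
  F' = F \/ (F' = F - 1 /\ Z.odd F' = true) \/ (F' = F + 1 /\ Z.even F = true).
Proof.
  intros HP H1 H2 [H3 H4] [H5 H6] F F'.
  pose proof (Z.div_le_mono _ _ _ HP H1).
  pose proof (Z.div_le_mono _ _ _ HP H2).
  pose proof (Z.div_le_mono _ _ _ HP H3).
  pose proof (Z.div_le_mono _ _ _ HP H5).
  pose proof (Z.div_le_mono _ _ _ HP H4).
  pose proof (Z.div_le_mono _ _ _ HP H6).
  replace (X + P) with (X + 1 * P) in * by lia.
  replace (X' + P) with (X' + 1 * P) in * by lia.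
  rewrite Z.div_add in * by lia.
  subst F F'.
  assert (E : forall z, Z.odd (2*z+1) = true /\ Z.even (2*z) = true).
  { intro z. split; [apply Z.odd_spec | apply Z.even_spec]; eexists; reflexivity. }
  set (a := X / P) in *. set (b := Y / P) in *. set (a' := X' / P) in *. set (b' := Y' / P) in *.
  assert (b = a \/ b = a + 1) as [Hb|Hb] by lia.
  - assert ((a' = a /\ b' = a) \/ (a' = a /\ b' = a + 1) \/ (a' = a - 1 /\ b' = a)) as [[-> ->]|[[-> ->]|[-> ->]]] by lia; rewrite Hb.
    + left; lia.
    + right; right; split; [lia|]. replace (a + a) with (2*a) by lia. apply E.
    + right; left; split; [lia|]. replace (a - 1 + a) with (2*(a-1)+1) by lia. apply E.
  - left; lia.
Qed.

Lemma tent c d d' n :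
  (d' = d \/ (d' = d - 1 /\ Z.odd d' = true) \/ (d' = d + 1 /\ Z.even d = true)) ->
  let g := fun d n => if andb (d <? n) (n <? 2 * c - d) then Z.min (n - d) (2 * c - d - n) else 0 in
  (Z.odd n = true -> g d' (n + 1) - g d' n >= g d (n + 1) - g d n) /\
  (Z.even n = true -> g d' (n + 1) - g d' n <= g d (n + 1) - g d n).
Proof.
  intros H g. subst g. cbv beta.
  split; intro Hn; [apply Z.odd_spec in Hn | apply Z.even_spec in Hn]; destruct Hn as [t Ht];
  destruct H as [->|[[-> Hd]|[-> Hd]]];
  try (apply Z.odd_spec in Hd); try (apply Z.even_spec in Hd);
  try (destruct Hd as [u Hu]); try lia;
  repeat match goal with |- context [?x <? ?y] => destruct (Z.ltb_spec x y) end; cbn [andb]; lia.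
Qed.

Theorem mainTheorem11 (p k0 : Z) :
  prime p -> 7 <= p -> 2 <= k0 <= p ->
  forall (n k s s' : Z), 0 <= n -> inK p k0 k ->
    inS p k0 s -> inS p k0 s' -> s < s' ->
    (Z.odd n = true ->
       m_dag p k0 s' (n + 1) k - m_dag p k0 s' n k >=
       m_dag p k0 s (n + 1) k - m_dag p k0 s n k) /\
    (Z.even n = true ->
       m_dag p k0 s' (n + 1) k - m_dag p k0 s' n k <=
       m_dag p k0 s (n + 1) k - m_dag p k0 s n k).
Proof.
  intros _ Hp Hk n k s s' _ _ HS HS' Hss.
  destruct (inS_bounds p k0 s Hp HS) as [B1 B2].
  destruct (inS_bounds p k0 s' Hp HS') as [B1' B2'].
  unfold m_dag. rewrite !(d_ur_eq p k0 s k), !(d_ur_eq p k0 s' k) by assumption.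
  unfold d_Iw.
  set (kb := kbullet p k0 k).
  pose proof (floor_step (p+1) (kb - 1 - s) (kb + 1 - k0 + s) (kb - 1 - s') (kb + 1 - k0 + s')
     ltac:(lia) ltac:(lia) ltac:(lia) ltac:(lia) ltac:(lia)) as FS.
  simpl in FS.
  set (F := (kb - 1 - s) / (p + 1) + (kb + 1 - k0 + s) / (p + 1)) in *.
  set (F' := (kb - 1 - s') / (p + 1) + (kb + 1 - k0 + s') / (p + 1)) in *.
  replace ((kb - 1 - s) / (p + 1) + (kb + 1 - k0 + s) / (p + 1) + 2) with (F + 2) by reflexivity.
  replace ((kb - 1 - s') / (p + 1) + (kb + 1 - k0 + s') / (p + 1) + 2) with (F' + 2) by reflexivity.
  replace (2 * kb + 2) with (2 * (kb + 1)) by lia.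
  apply (tent (kb + 1) (F + 2) (F' + 2) n).
  destruct FS as [->|[[-> Ho]|[-> He]]].
  - left; reflexivity.
  - right; left; split; [lia|]. rewrite Z.odd_add. rewrite Ho. reflexivity.
  - right; right; split; [lia|]. rewrite Z.even_add. rewrite He. reflexivity.
Qed.
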